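(* Let $\mathbf{F}:\ell^n\times\ell^m\to\ell^n$ be a strictly causal plant operator with components $F_0\equiv0$, $F_t(x_{t:0},u_{t:0})=f_t(x_{t-1:0},u_{t-1:0})$, and let $\mathbf{\Psi}=(\mathbf{\Psi}^x,\mathbf{\Psi}^u):\ell^n\to\ell^n\times\ell^m$ be causal with $\mathbf{\Psi}^x-\mathbf{I}$ strictly causal ($\mathbf{\Psi}$ is not assumed to be a closed-loop map). Fix $p$. Assume that $\mathbf{\Psi}$ and $\mathbf{F}$ are incrementally finite gain $\ell_p$-stable, and that the residual operator $$\mathbf{\Delta}[\mathbf{F},\mathbf{\Psi}]:=\mathbf{F}(\mathbf{\Psi})+\mathbf{I}-\mathbf{\Psi}^x:\ell^n\to\ell^n$$ is $(\gamma,\beta)$-incrementally finite gain $\ell_p$-stable with $\gamma<1$. Then, for every $\bm{\delta}^*\in\ell^n_p\times\ell^m_p\times\ell^n_p$, the perturbed closed-loop map $\mathbf{\Phi}_{S_1'}[\mathbf{F},\mathbf{\Psi}]$ is finite gain $\ell_p$-stable at $\bm{\delta}^*$.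
   Context: $\ell^n$ is the space of sequences in $\mathbb{R}^n$ indexed by $t=0,1,2,\dots$; $|\cdot|$ is a fixed norm on each $\mathbb{R}^k$; $\|\mathbf{x}\|_p=(\sum_{k\ge0}|x_k|^p)^{1/p}$ for $p<\infty$, $\|\mathbf{x}\|_\infty=\sup_k|x_k|$, and $\ell^n_p=\{\mathbf{x}\in\ell^n:\|\mathbf{x}\|_p<\infty\}$. On product spaces the norm is the sum, e.g. $\|(\mathbf{w},\mathbf{d},\mathbf{v})\|_p=\|\mathbf{w}\|_p+\|\mathbf{d}\|_p+\|\mathbf{v}\|_p$. Causal / strictly causal operators: $(\mathbf{A}(\mathbf{x}))_t=A_t(x_{t:0})$ with component functions $A_t$, strictly causal if $A_t$ does not depend on its first argument $x_t$; sums are pointwise, products are compositions, $\mathbf{F}(\mathbf{\Psi})$ means $\mathbf{w}\mapsto\mathbf{F}(\mathbf{\Psi}^x(\mathbf{w}),\mathbf{\Psi}^u(\mathbf{w}))$. An operator $\mathbf{A}$ between such spaces is: finite gain (f.g.) $\ell_p$-stable at $\mathbf{a}_0\in\ell_p$ if there are $\gamma,\beta\ge0$ with $\|\mathbf{A}(\mathbf{a})-\mathbf{A}(\mathbf{a}_0)\|_p\le\gamma\|\mathbf{a}-\mathbf{a}_0\|_p+\beta$ for all $\mathbf{a}\in\ell_p$; $(\gamma,\beta)$-incrementally finite gain (i.f.g.) $\ell_p$-stable if $\|\mathbf{A}(\mathbf{a})-\mathbf{A}(\mathbf{a}')\|_p\le\gamma\|\mathbf{a}-\mathbf{a}'\|_p+\beta$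 for all $\mathbf{a},\mathbf{a}'\in\ell_p$ (i.f.g. if this holds for some $\gamma,\beta\ge0$). The perturbed closed loop $S_1'$: given perturbations $\bm{\delta}=(\mathbf{w},\mathbf{d},\mathbf{v})\in\ell^n\times\ell^m\times\ell^n$, define recursively $x_0=w_0$, $x_t=f_t(x_{t-1:0},u_{t-1:0})+w_t$ ($t\ge1$), $\hat w_t=x_t+v_t-\Psi^x_t(0,\hat w_{t-1:0})$, $u_t=\Psi^u_t(\hat w_{t:0})+d_t$ (the controller with internal state $\hat{\mathbf{w}}$ is the ''system level controller'' parametrized by $\mathbf{\Psi}$). The map $\mathbf{\Phi}_{S_1'}[\mathbf{F},\mathbf{\Psi}]:\ell^n\times\ell^m\times\ell^n\to\ell^n\times\ell^m\times\ell^n$ is $\bm{\delta}\mapsto(\mathbf{x},\mathbf{u},\hat{\mathbf{w}})$. *)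

(* Defs.v *)
From HB Require Import structures.
From mathcomp Require Import all_boot all_order all_algebra.
From mathcomp Require Import all_classical all_reals all_analysis.
Set Implicit Arguments. Unset Strict Implicit. Unset Printing Implicit Defensive.
Import Order.TTheory GRing.Theory Num.Theory.
Local Open Scope ring_scope.

Section Defs.
Variable R : realType.

Definition sq (k : nat) := nat -> 'rV[R]_k.

Definition is_norm (k : nat) (N : 'rV[R]_k -> R) : Prop :=
  [/\ forall x y, N (x + y) <= N x + N y,
      forall (a : R) x, N (a *: x) = `|a| * N x
    & forall x, N x = 0 -> x = 0].

Definition ssub k (x y : sq k) : sq k := fun t => x t - y t.

Definition lpnorm k (N : 'rV[R]_k -> R) (p : \bar R) (x : sq k) : \bar R :=
  match p with
  | +oo%E => ereal_sup (range (fun t => (N (x t))%:E))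
  | r%:E => poweR (\sum_(0 <= t <oo) ((powR (N (x t)) r)%:E))%E r^-1
  | -oo%E => +oo%E
  end.

Definition inlp k N p (x : sq k) : Prop := (lpnorm N p x < +oo)%E.

Definition causal k l (A : sq k -> sq l) : Prop :=
  forall x y t, (forall s, (s <= t)%N -> x s = y s) -> A x t = A y t.
Definition strictly_causal k l (A : sq k -> sq l) : Prop :=
  forall x y t, (forall s, (s < t)%N -> x s = y s) -> A x t = A y t.
Definition strictly_causal2 k j l (A : sq k -> sq j -> sq l) : Prop :=
  forall x u y v t, (forall s, (s < t)%N -> x s = y s /\ u s = v s) ->
    A x u t = A y v t.

(* The perturbed closed loop S_1', defined recursively in time.
   traj T holds the trajectory (x, u, what) correct on times < T (zero after). *)
Fixpoint s1_traj n m (F : sq n -> sq m -> sq n) (Psix : sq n -> sq n)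
    (Psiu : sq n -> sq m) (w : sq n) (d : sq m) (v : sq n) (T : nat)
    : sq n * sq m * sq n :=
  match T with
  | 0%N => (fun _ => 0, fun _ => 0, fun _ => 0)
  | T'.+1 =>
    let: (xs, us, ws) := s1_traj F Psix Psiu w d v T' in
    let xT := F xs us T' + w T' in
    let wT := xT + v T' - Psix (fun s => if (s < T')%N then ws s else 0) T' in
    let ws' := fun s => if s == T' then wT else ws s in
    let uT := Psiu ws' T' + d T' in
    (fun s => if s == T' then xT else xs s,
     fun s => if s == T' then uT else us s, ws')
  end.

Definition Phi_S1 n m (F : sq n -> sq m -> sq n) (Psix : sq n -> sq n)
    (Psiu : sq n -> sq m) (delta : sq n * sq m * sq n) : sq n * sq m * sq n :=
  let: (w, d, v) := delta in
  (fun t => (s1_traj F Psix Psiu w d v t.+1).1.1 t,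
   fun t => (s1_traj F Psix Psiu w d v t.+1).1.2 t,
   fun t => (s1_traj F Psix Psiu w d v t.+1).2 t).

End Defs.

(* Main.v *)
Require Import Defs.
From HB Require Import structures.
From mathcomp Require Import all_boot all_order all_algebra.
From mathcomp Require Import all_classical all_reals all_analysis.
From mathcomp Require Import ring lra.
Import Order.TTheory GRing.Theory Num.Theory.
Set Implicit Arguments. Unset Strict Implicit. Unset Printing Implicit Defensive.
Local Open Scope ring_scope.

Lemma ar_c0 (R : realType) (be bF gF cv cd : R) : 0<=be -> 0<=bF -> 0<=gF -> 0<=cv -> 0<=cd ->
  0 <= be + bF + bF + gF*(cv+cd) + gF*(cv+cd).
Proof. move=> *; have := mulr_ge0 (_ : 0 <= gF) (_ : 0 <= cv + cd); nra. Qed.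
Lemma ar_g (R : realType) (gP gF q : R) : 0<=gP -> 0<=gF -> 0<q -> 0 <= (2*gP+1)*(1+gF)*q + 1.
Proof.
move=> h1 h2 h3; have h4 : 0 <= (2*gP+1)*(1+gF) by apply: mulr_ge0; lra.
have := mulr_ge0 h4 (ltW h3); lra.
Qed.
Lemma ar_b (R : realType) (gP c0 q bP : R) : 0<=gP -> 0<=c0 -> 0<q -> 0<=bP -> 0 <= (2*gP+1)*c0*q + 2*bP.
Proof.
move=> h1 h2 h3 h5; have h4 : 0 <= (2*gP+1)*c0 by apply: mulr_ge0; lra.
have := mulr_ge0 h4 (ltW h3); lra.
Qed.
Lemma ar_num (R : realType) (be bF gF cv cd fv fd Dw Dd Dv : R) :
  0 <= gF -> 0 <= Dw -> 0 <= Dd -> fv <= Dv + cv -> fd <= Dd + cd ->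
  be + (gF*(fv+fd)+bF) + (gF*(cv+cd)+bF) + Dw + Dv <=
  (be+bF+bF+gF*(cv+cd)+gF*(cv+cd)) + (1+gF)*(Dw+Dd+Dv).
Proof.
move=> h1 h0 h2 h3 h4.
have := ler_wpM2l h1 (lerD h3 h4). have := mulr_ge0 h1 h0. nra.
Qed.
Lemma ar_fin (R : realType) (gP bP gF q c0 k Dw Dd Dv : R) :
  0 <= gP -> 0 <= Dw -> 0 <= Dd -> 0 <= Dv ->
  k <= q * (c0 + (1+gF)*(Dw+Dd+Dv)) ->
  gP * k + bP + Dv + (gP * k + bP + Dd) + k <=
  ((2*gP+1)*(1+gF)*q+1)*(Dw+Dd+Dv) + ((2*gP+1)*c0*q + 2*bP).
Proof.
move=> h1 h2 h3 h4 hk.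
have := ler_wpM2l (_ : 0 <= 2*gP+1) hk. move=> /(_ ltac:(lra)) H.
nra.
Qed.

Section LpS.
Variable R : realType.
Local Open Scope ereal_scope.

Definition Lp (p : \bar R) (phi : nat -> R) : \bar R :=
  match p with
  | +oo%E => ereal_sup (range (fun t => (phi t)%:E))
  | r%:E => poweR (\sum_(0 <= t <oo) ((powR (phi t) r)%:E))%E r^-1
  | -oo%E => +oo%E
  end.

Definition trf (T : nat) (phi : nat -> R) : nat -> R :=
  fun t => if (t < T)%N then phi t else 0%R.

Lemma Lp_ge0 p phi : (forall t, 0 <= phi t)%R -> 0 <= Lp p phi.
Proof.
move=> h; case: p => [r| |] /=; first exact: poweR_ge0.
- apply: le_trans (ereal_sup_ubound _); last by exists 0%N.
  by rewrite lee_fin.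
- by rewrite leey.
Qed.

Lemma series_ge0 (f : nat -> R) : (forall t, 0 <= f t)%R ->
  0 <= \sum_(0 <= t <oo) (f t)%:E.
Proof. by move=> h; apply: nneseries_ge0 => n _ _; rewrite lee_fin. Qed.

Lemma Lp_le p phi psi : 1 <= p -> (forall t, 0 <= phi t <= psi t)%R ->
  Lp p phi <= Lp p psi.
Proof.
move=> p1 h; case: p p1 => [r| |] //= p1.
- have r0 : (0 < r)%R by move: p1; rewrite lee_fin => /(lt_le_trans ltr01).
  have := @gt0_ler_poweR R r^-1; rewrite invr_ge0 ltW // => H; apply: H.
  + by [].
  + by rewrite in_itv /= leey andbT; apply: series_ge0 => t; exact: powR_ge0.
  + by rewrite in_itv /= leey andbT; apply: series_ge0 => t; exact: powR_ge0.
  apply: lee_nneseries => [i _ _|n _]; first by rewrite lee_fin powR_ge0.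
  rewrite lee_fin; have /andP[a b] := h n.
  by apply: ge0_ler_powR; rewrite ?nnegrE ?(ltW r0) ?(le_trans a b).
- apply: ge_ereal_sup => _ [t _ <-].
  apply: le_trans (ereal_sup_ubound _); last by exists t.
  by rewrite lee_fin; have /andP[] := h t.
Qed.

Lemma mnat (f : nat -> R) : measurable_fun [set: nat] f.
Proof. move=> _ Y mY. by []. Qed.

Lemma Lp_Lnorm r phi : (0 < r)%R -> (forall t, 0 <= phi t)%R ->
  Lp r%:E phi = 'N[counting]_r%:E [EFin \o phi].
Proof.
move=> r0 h; rewrite Lnorm_counting //=; congr poweR.
apply: congr_lim; apply/funext => n /=; apply: eq_bigr => i _.
by rewrite ger0_norm.
Qed.

Lemma Lp_add p phi psi : 1 <= p -> (forall t, 0 <= phi t)%R -> (forall t, 0 <= psi t)%R ->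
  Lp p (fun t => phi t + psi t)%R <= Lp p phi + Lp p psi.
Proof.
move=> p1 h1 h2; case: p p1 => [r| |] // p1.
- have r1 : (1 <= r)%R by move: p1; rewrite lee_fin.
  have r0 : (0 < r)%R by exact: (lt_le_trans ltr01).
  rewrite !Lp_Lnorm // => [|t]; last by rewrite addr_ge0.
  exact: (@minkowski_EFin _ nat R counting phi psi r (mnat phi) (mnat psi) r1).
- rewrite /=; apply: ge_ereal_sup => _ [t _ <-]; rewrite EFinD; apply: leeD.
  + by apply: ereal_sup_ubound; exists t.
  + by apply: ereal_sup_ubound; exists t.
Qed.

Lemma Lp_tr_fin p phi T : 1 <= p -> (forall t, 0 <= phi t)%R -> Lp p (trf T phi) < +oo.
Proof.
move=> p1 h; case: p p1 => [r| |] //= p1.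
- have r1 : (1 <= r)%R by move: p1; rewrite lee_fin.
  have r0 : (0 < r)%R by exact: (lt_le_trans ltr01).
  apply: poweR_lty.
  rewrite (@nneseries_split _ _ 0 T) => [|k _]; last by rewrite lee_fin powR_ge0.
  rewrite add0n eseries0 ?adde0 => [|i Ti _]; last first.
    by rewrite /trf ltnNge Ti /= powR0 ?gt_eqF.
  by rewrite sumEFin ltry.
- have S0 : (0 <= \sum_(0 <= s < T) phi s)%R by apply: sumr_ge0.
  apply: (@le_lt_trans _ _ (\sum_(0 <= s < T) phi s)%R%:E); last exact: ltry.
  apply: ge_ereal_sup => _ [t _ <-]; rewrite lee_fin /trf.
  case: ifPn => tT //.
  rewrite (bigD1_seq t) /= ?mem_index_iota ?iota_uniq //.
  rewrite lerDl sumr_ge0 // => i _; exact: h.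
Qed.

Lemma Lp_sup p phi c : 1 <= p -> (forall t, 0 <= phi t)%R ->
  (forall T, Lp p (trf T phi) <= c) -> Lp p phi <= c.
Proof.
move=> p1 h hc; case: p p1 hc => [r| |] //= p1 hc.
- have r1 : (1 <= r)%R by move: p1; rewrite lee_fin.
  have r0 : (0 < r)%R by exact: (lt_le_trans ltr01).
  have c0 : 0 <= c.
    apply: le_trans (hc 0%N); apply: poweR_ge0.
  case: c c0 hc => [c| |] // c0 hc; last by rewrite leey.
  rewrite lee_fin in c0.
  have key : \sum_(0 <= t <oo) ((powR (phi t) r)%:E) <= (powR c r)%:E.
    apply: lime_le; first by apply: is_cvg_nneseries => n _ _; rewrite lee_fin powR_ge0.
    apply: nearW => T.
    have S0 : 0 <= \sum_(0 <= t < T) (powR (phi t) r)%:E.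
      by rewrite sumEFin lee_fin sumr_ge0 // => i _; rewrite powR_ge0.
    have e1 : \sum_(0 <= t < T) (powR (phi t) r)%:E <=
              \sum_(0 <= t <oo) ((powR (trf T phi t) r)%:E).
      apply: le_trans (@nneseries_lim_ge _ (fun t => (powR (trf T phi t) r)%:E) xpredT 0 T _); last first.
        by move=> n _ _; rewrite lee_fin powR_ge0.
      rewrite le_eqVlt; apply/orP; left; apply/eqP.
      rewrite !big_nat; apply: eq_bigr => i /andP[_ iT].
      by rewrite /trf iT.
    have := hc T => /(gt0_ler_poweR (ltW r0)).
    rewrite !in_itv /= !leey !andbT poweR_ge0 lee_fin c0 => /(_ isT isT).
    rewrite -poweRrM mulVf ?gt_eqF // poweRe1; last first.
      by apply: series_ge0 => t; rewrite powR_ge0.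
    exact: le_trans e1.
  have := gt0_ler_poweR (r := r^-1) _ _ _ key.
  rewrite invr_ge0 ltW // !in_itv /= !leey !andbT lee_fin powR_ge0.
  rewrite series_ge0 => [|t]; last by rewrite powR_ge0.
  move=> /(_ isT isT isT); rewrite -powRrM mulfV ?gt_eqF // powRr1 //.
- apply: ge_ereal_sup => _ [t _ <-].
  apply: le_trans (hc t.+1); apply: ereal_sup_ubound; exists t => //.
  by rewrite /trf ltnSn.
Qed.
End LpS.

Unset Implicit Arguments.
Section Traj.
Variable R : realType.
Variables (n m : nat) (F : sq R n -> sq R m -> sq R n) (Psix : sq R n -> sq R n)
  (Psiu : sq R n -> sq R m) (w : sq R n) (d : sq R m) (v : sq R n).
Hypothesis hF : strictly_causal2 F.
Hypothesis hPu : causal Psiu.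
Hypothesis hPx : strictly_causal (fun w => ssub (Psix w) w).

Local Notation tj := (s1_traj F Psix Psiu w d v).
Definition Xs := fun t => (tj t.+1).1.1 t.
Definition Us := fun t => (tj t.+1).1.2 t.
Definition Ws := fun t => (tj t.+1).2 t.

Lemma PhiE : Phi_S1 F Psix Psiu (w, d, v) = (Xs, Us, Ws).
Proof. by []. Qed.

Lemma tj_step T s : s != T ->
  [/\ (tj T.+1).1.1 s = (tj T).1.1 s, (tj T.+1).1.2 s = (tj T).1.2 s
    & (tj T.+1).2 s = (tj T).2 s].
Proof.
by move=> sT /=; case: (tj T) => [[xs us] ws] /=; rewrite (negbTE sT).
Qed.

Lemma tj_at T s : (s < T)%N ->
  [/\ (tj T).1.1 s = Xs s, (tj T).1.2 s = Us s & (tj T).2 s = Ws s].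
Proof.
elim: T => // T IH; rewrite ltnS leq_eqVlt => /orP[/eqP -> //|sT].
have [a b c] := @tj_step T s (negbT (ltn_eqF sT)).
by have [a' b' c'] := IH sT; rewrite a b c.
Qed.

Lemma cl_x t : Xs t = F Xs Us t + w t.
Proof.
have H := @tj_at t.
rewrite {1}/Xs /=; move: H; case: (tj t) => [[xs us] ws] /= H.
rewrite eqxx; congr (_ + _); apply: hF => s st.
by have [a b _] := H s st.
Qed.

Lemma cl_u t : Us t = Psiu Ws t + d t.
Proof.
have H := @tj_at t.
have eW : Ws t = (tj t.+1).2 t by [].
rewrite {1}/Us /=; move: H eW; rewrite /=; case: (tj t) => [[xs us] ws] /= H eW.
rewrite eqxx; congr (_ + _); apply: hPu => s; rewrite leq_eqVlt => /orP[/eqP ->|st].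
  by rewrite eqxx eW eqxx.
by rewrite (ltn_eqF st); have [_ _ c] := H s st.
Qed.

Lemma tjW T : (tj T.+1).2 T =
  (tj T.+1).1.1 T + v T - Psix (fun s => if (s < T)%N then (tj T).2 s else 0) T.
Proof. by rewrite /=; case: (tj T) => [[xs us] ws] /=; rewrite !eqxx. Qed.

Lemma cl_w t : Psix Ws t = Xs t + v t.
Proof.
have e1 : Ws t = Xs t + v t - Psix (fun s => if (s < t)%N then Ws s else 0) t.
  rewrite /Ws /Xs tjW; congr (_ - Psix _ t); apply/funext => s.
  case: ifP => // st; by have [_ _ ->] := @tj_at t s st.
set z := (fun s => if (s < t)%N then Ws s else 0) in e1.
have zt : z t = 0 by rewrite /z ltnn.
have e2 : Psix z t - z t = Psix Ws t - Ws t.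
  by apply: (hPx z Ws t) => s st; rewrite /z st.
rewrite zt subr0 in e2; rewrite e2 in e1.
by move/eqP: e1; rewrite eq_sym subr_eq subrKC => /eqP <-.
Qed.
End Traj.

Section NormS.
Variable R : realType.
Variable N : forall k : nat, 'rV[R]_k -> R.
Hypothesis hN : forall k, is_norm (N k).
Variable p : \bar R.
Hypothesis p1 : (1 <= p)%E.

Lemma N0 k : N k 0 = 0%R.
Proof. have [_ hs _] := hN k. by rewrite -(scale0r (0 : 'rV[R]_k)) hs normr0 mul0r. Qed.

Lemma NN k x : N k (- x) = N k x.
Proof. have [_ hs _] := hN k. by rewrite -scaleN1r hs normrN normr1 mul1r. Qed.

Lemma Nge0 k x : (0 <= N k x)%R.
Proof.
have [ht _ _] := hN k. have := ht x (- x). rewrite subrr N0 NN.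
by rewrite -mulr2n pmulrn_lge0.
Qed.

Lemma Ntri k x y : (N k (x + y) <= N k x + N k y)%R.
Proof. by have [ht _ _] := hN k. Qed.

Lemma NB k x y : N k (x - y) = N k (y - x).
Proof. by rewrite -NN opprB. Qed.

Local Open Scope ereal_scope.
Lemma nuE k x : lpnorm (N k) p x = Lp p (fun t => N k (x t)).
Proof. by case: p. Qed.

Lemma nu_ge0 k x : 0 <= lpnorm (N k) p x.
Proof. by rewrite nuE; apply: Lp_ge0 => t; exact: Nge0. Qed.

Lemma nu_le k l (a : sq R k) (b : sq R l) :
  (forall t, N k (a t) <= N l (b t))%R -> lpnorm (N k) p a <= lpnorm (N l) p b.
Proof. by move=> h; rewrite !nuE; apply: Lp_le => // t; rewrite Nge0 h. Qed.

Lemma nu_le2 k l1 l2 (a : sq R k) (b : sq R l1) (c : sq R l2) :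
  (forall t, N k (a t) <= N l1 (b t) + N l2 (c t))%R ->
  lpnorm (N k) p a <= lpnorm (N l1) p b + lpnorm (N l2) p c.
Proof.
move=> h; rewrite !nuE.
apply: le_trans (Lp_add p1 (fun t => Nge0 _ (b t)) (fun t => Nge0 _ (c t))).
by apply: Lp_le => // t; rewrite Nge0 h.
Qed.

Definition tr k (T : nat) (x : sq R k) : sq R k :=
  fun t => if (t < T)%N then x t else 0%R.
Arguments tr {k}.

Lemma nu_tr k T x : lpnorm (N k) p (tr T x) = Lp p (trf T (fun t => N k (x t))).
Proof.
rewrite nuE; congr Lp; apply/funext => t; rewrite /tr /trf.
by case: ifP => //; rewrite N0.
Qed.

Lemma nu_tr_fin k T x : lpnorm (N k) p (tr T x) < +oo.
Proof. by rewrite nu_tr; apply: Lp_tr_fin => // t; exact: Nge0. Qed.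

Lemma inlp_tr k T x : inlp (N k) p (tr T x).
Proof. exact: nu_tr_fin. Qed.

Lemma nu_tr_le k T x : lpnorm (N k) p (tr T x) <= lpnorm (N k) p x.
Proof. by apply: nu_le => t; rewrite /tr; case: ifP; rewrite ?N0 ?Nge0. Qed.

Lemma nu_sup k x c : (forall T, lpnorm (N k) p (tr T x) <= c) -> lpnorm (N k) p x <= c.
Proof.
move=> h; rewrite nuE; apply: Lp_sup => // [t|T]; first exact: Nge0.
by rewrite -nu_tr.
Qed.

Lemma nu_fin k x : inlp (N k) p x -> lpnorm (N k) p x = (fine (lpnorm (N k) p x))%:E.
Proof.
move=> h; rewrite fineK // ge0_fin_numE //; exact: nu_ge0.
Qed.


Lemma nu_le5 k (a b1 b2 b3 b4 b5 : sq R k) :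
  (forall t, N k (a t) <= N k (b1 t) + N k (b2 t) + N k (b3 t) + N k (b4 t) + N k (b5 t))%R ->
  lpnorm (N k) p a <= lpnorm (N k) p b1 + lpnorm (N k) p b2 + lpnorm (N k) p b3
     + lpnorm (N k) p b4 + lpnorm (N k) p b5.
Proof.
move=> h; rewrite !nuE.
have g : forall (b : sq R k) t, (0 <= N k (b t))%R by move=> b t; exact: Nge0.
have g2 : forall (b b' : sq R k) t, (0 <= N k (b t) + N k (b' t))%R.
  by move=> b b' t; rewrite addr_ge0.
apply: le_trans (Lp_le (psi := fun t => N k (b1 t) + N k (b2 t) + N k (b3 t) + N k (b4 t) + N k (b5 t))%R p1 _) _.
  by move=> t; rewrite Nge0 h.
apply: le_trans (Lp_add p1 _ (g b5)) _.
  by move=> t; rewrite !addr_ge0.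
apply: leeD2r; apply: le_trans (Lp_add p1 _ (g b4)) _.
  by move=> t; rewrite !addr_ge0.
apply: leeD2r; apply: le_trans (Lp_add p1 _ (g b3)) _.
  by move=> t; rewrite !addr_ge0.
apply: leeD2r; exact: (Lp_add p1 (g b1) (g b2)).
Qed.

Lemma inlp_sub k (a b : sq R k) : inlp (N k) p a -> inlp (N k) p b -> inlp (N k) p (ssub a b).
Proof.
move=> ha hb; rewrite /inlp.
apply: le_lt_trans (lte_add_pinfty ha hb).
apply: nu_le2 => t; rewrite /ssub -(NN _ (b t)); exact: Ntri.
Qed.

Lemma nu_tri_sub k (a b : sq R k) :
  lpnorm (N k) p a <= lpnorm (N k) p (ssub a b) + lpnorm (N k) p b.
Proof. by apply: nu_le2 => t; rewrite /ssub -{1}(subrK (b t) (a t)); exact: Ntri. Qed.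

Lemma tr_sub k T (a b : sq R k) : ssub (tr T a) (tr T b) = tr T (ssub a b).
Proof. by apply/funext => t; rewrite /ssub /tr; case: ifP; rewrite ?subr0. Qed.

Variables (n m : nat) (F : sq R n -> sq R m -> sq R n) (Psix : sq R n -> sq R n)
  (Psiu : sq R n -> sq R m).
Hypothesis hF : strictly_causal2 F.
Hypothesis hPxc : causal Psix.
Hypothesis hPuc : causal Psiu.
Hypothesis hPxs : strictly_causal (fun w => ssub (Psix w) w).
Variables (gP bP gF bF ga be : R).
Hypothesis gP0 : (0 <= gP)%R.
Hypothesis bP0 : (0 <= bP)%R.
Hypothesis gF0 : (0 <= gF)%R.
Hypothesis bF0 : (0 <= bF)%R.
Hypothesis ga0 : (0 <= ga)%R.
Hypothesis ga1 : (ga < 1)%R.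
Hypothesis be0 : (0 <= be)%R.
Hypothesis hPsi : forall w w', inlp (N n) p w -> inlp (N n) p w' ->
       (lpnorm (N n) p (ssub (Psix w) (Psix w'))
        + lpnorm (N m) p (ssub (Psiu w) (Psiu w'))
        <= gP%:E * lpnorm (N n) p (ssub w w') + bP%:E)%E.
Hypothesis hFb : forall x u x' u', inlp (N n) p x -> inlp (N m) p u ->
       inlp (N n) p x' -> inlp (N m) p u' ->
       (lpnorm (N n) p (ssub (F x u) (F x' u'))
        <= gF%:E * (lpnorm (N n) p (ssub x x') + lpnorm (N m) p (ssub u u'))
           + bF%:E)%E.
Definition Dl := fun w : sq R n => fun t => (F (Psix w) (Psiu w) t + w t - Psix w t)%R.
Hypothesis hD : forall w w', inlp (N n) p w -> inlp (N n) p w' ->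
       (lpnorm (N n) p (ssub (Dl w) (Dl w'))
        <= ga%:E * lpnorm (N n) p (ssub w w') + be%:E)%E.

Lemma trE1 k T (a : sq R k) t : (t < T)%N -> tr T a t = a t.
Proof. by rewrite /tr => ->. Qed.
Lemma trE0 k T (a : sq R k) t : (T <= t)%N -> tr T a t = 0%R.
Proof. by rewrite /tr ltnNge => ->. Qed.

Lemma causal_tr k l (A : sq R k -> sq R l) T a t : causal A -> (t < T)%N -> A (tr T a) t = A a t.
Proof. by move=> hA tT; apply: hA => s st; rewrite /tr (leq_ltn_trans st tT). Qed.

Lemma F_tr T a b t : (t < T)%N -> F (tr T a) (tr T b) t = F a b t.
Proof. by move=> tT; apply: hF => s st; rewrite /tr (ltn_trans st tT). Qed.



Local Notation XX w d v := (Xs R n m F Psix Psiu w d v).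
Local Notation UU w d v := (Us R n m F Psix Psiu w d v).
Local Notation WW w d v := (Ws R n m F Psix Psiu w d v).

Definition GG T (X : sq R n) (U : sq R m) (W : sq R n) :=
  ssub (F (tr T X) (tr T U)) (F (tr T (Psix (tr T W))) (tr T (Psiu (tr T W)))).

Lemma G_bound T w d v :
  lpnorm (N n) p (GG T (XX w d v) (UU w d v) (WW w d v)) <=
  gF%:E * (lpnorm (N n) p v + lpnorm (N m) p d) + bF%:E.
Proof.
rewrite /GG; apply: le_trans (hFb _ _ _ _ (inlp_tr _ _ _) (inlp_tr _ _ _) (inlp_tr _ _ _) (inlp_tr _ _ _)) _.
apply: leeD2r; apply: lee_wpmul2l; first by rewrite lee_fin.
apply: leeD.
- apply: nu_le => t; rewrite /ssub; case: (ltnP t T) => tT; last by rewrite !trE0 // subr0 N0 Nge0.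
  rewrite !trE1 // (causal_tr _ _ _ _ _ _ hPxc tT) (@cl_w R n m F Psix Psiu w d v hPxs t).
  by rewrite opprD addrA subrr sub0r NN.
- apply: nu_le => t; rewrite /ssub; case: (ltnP t T) => tT; last by rewrite !trE0 // subr0 N0 Nge0.
  rewrite !trE1 // (causal_tr _ _ _ _ _ _ hPuc tT) (@cl_u R n m F Psix Psiu w d v hPuc t).
  by rewrite [(_ + d t)%R]addrC addrK.
Qed.

Lemma W_bound w d v w' d' v' T :
  lpnorm (N n) p (tr T (ssub (WW w d v) (WW w' d' v'))) <=
   ga%:E * lpnorm (N n) p (tr T (ssub (WW w d v) (WW w' d' v'))) + be%:E
   + (gF%:E * (lpnorm (N n) p v + lpnorm (N m) p d) + bF%:E)
   + (gF%:E * (lpnorm (N n) p v' + lpnorm (N m) p d') + bF%:E)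
   + lpnorm (N n) p (ssub w w') + lpnorm (N n) p (ssub v v').
Proof.
set W := WW w d v; set W' := WW w' d' v'.
apply: le_trans (@nu_le5 n _ (ssub (Dl (tr T W)) (Dl (tr T W'))) (GG T (XX w d v) (UU w d v) W)
   (GG T (XX w' d' v') (UU w' d' v') W') (ssub w w') (ssub v v') _) _.
  move=> t; case: (ltnP t T) => tT; last first.
    by rewrite trE0 // N0 !addr_ge0 ?Nge0.
  rewrite trE1 //.
  have eq : ssub W W' t = (ssub (Dl (tr T W)) (Dl (tr T W')) t + GG T (XX w d v) (UU w d v) W t
     - GG T (XX w' d' v') (UU w' d' v') W' t + ssub w w' t + ssub v v' t)%R.
    rewrite /GG /ssub /Dl !(causal_tr _ _ _ _ _ _ hPxc tT) !F_tr // !trE1 //.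
    rewrite /W /W'.
    rewrite (@cl_w R n m F Psix Psiu w d v hPxs t) (@cl_w R n m F Psix Psiu w' d' v' hPxs t).
    rewrite (@cl_x R n m F Psix Psiu w d v hF t) (@cl_x R n m F Psix Psiu w' d' v' hF t).
    by apply/rowP => i; rewrite !mxE; lra.
  rewrite eq; apply: le_trans (Ntri _ _ _) _; apply: lerD => //.
  apply: le_trans (Ntri _ _ _) _; apply: lerD => //.
  apply: le_trans (Ntri _ _ _) _; rewrite NN; apply: lerD => //; exact: Ntri.
apply: leeD => //; apply: leeD => //; apply: leeD; last exact: G_bound.
apply: leeD; last exact: G_bound.
by rewrite -tr_sub; apply: hD; exact: inlp_tr.
Qed.

Arguments nu_fin {k x}.
Arguments inlp_sub {k a b}.
Definition KK w d v w' d' v' : R :=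
  ((be + (gF * (fine (lpnorm (N n) p v) + fine (lpnorm (N m) p d)) + bF)
       + (gF * (fine (lpnorm (N n) p v') + fine (lpnorm (N m) p d')) + bF)
       + fine (lpnorm (N n) p (ssub w w')) + fine (lpnorm (N n) p (ssub v v'))) / (1 - ga))%R.

Lemma W_fin w d v w' d' v' :
  inlp (N n) p w -> inlp (N m) p d -> inlp (N n) p v ->
  inlp (N n) p w' -> inlp (N m) p d' -> inlp (N n) p v' ->
  lpnorm (N n) p (ssub (WW w d v) (WW w' d' v')) <= (KK w d v w' d' v')%:E.
Proof.
move=> hw hd hv hw' hd' hv'.
apply: nu_sup => T.
have := W_bound w d v w' d' v' T.
rewrite (nu_fin (inlp_tr _ T _)) (nu_fin hv) (nu_fin hd) (nu_fin hv') (nu_fin hd')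
  (nu_fin (inlp_sub hw hw')) (nu_fin (inlp_sub hv hv')).
rewrite -!EFinD !lee_fin /KK.
rewrite ler_pdivlMr ?subr_gt0 //.
move=> H; nra.
Qed.

Lemma X_fin w d v w' d' v' :
  inlp (N n) p w -> inlp (N m) p d -> inlp (N n) p v ->
  inlp (N n) p w' -> inlp (N m) p d' -> inlp (N n) p v' ->
  lpnorm (N n) p (ssub (XX w d v) (XX w' d' v')) <=
  (gP * KK w d v w' d' v' + bP + fine (lpnorm (N n) p (ssub v v')))%:E.
Proof.
move=> hw hd hv hw' hd' hv'.
have hW := @W_fin w d v w' d' v' hw hd hv hw' hd' hv'.
apply: nu_sup => T.
set W := WW w d v; set W' := WW w' d' v'.
apply: le_trans (@nu_le2 n n n _ (ssub (Psix (tr T W)) (Psix (tr T W'))) (ssub v v') _) _.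
  move=> t; case: (ltnP t T) => tT; last by rewrite trE0 // N0 addr_ge0 ?Nge0.
  rewrite trE1 // /ssub !(causal_tr _ _ _ _ _ _ hPxc tT) /W /W'.
  rewrite (@cl_w R n m F Psix Psiu w d v hPxs t) (@cl_w R n m F Psix Psiu w' d' v' hPxs t).
  have -> : (XX w d v t - XX w' d' v' t = (XX w d v t + v t - (XX w' d' v' t + v' t))
            + - (v t - v' t))%R by apply/rowP => i; rewrite !mxE; lra.
  by apply: le_trans (Ntri _ _ _) _; rewrite NN.
rewrite !EFinD EFinM -(nu_fin (inlp_sub hv hv')); apply: leeD2r.
apply: le_trans (@leeDl _ _ _ (nu_ge0 _ (ssub (Psiu (tr T W)) (Psiu (tr T W'))))) _.
apply: le_trans (hPsi _ _ (inlp_tr _ _ _) (inlp_tr _ _ _)) _.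
apply: leeD2r; apply: lee_wpmul2l; first by rewrite lee_fin.
by rewrite tr_sub; apply: le_trans (nu_tr_le _ _ _) hW.
Qed.

Lemma U_fin w d v w' d' v' :
  inlp (N n) p w -> inlp (N m) p d -> inlp (N n) p v ->
  inlp (N n) p w' -> inlp (N m) p d' -> inlp (N n) p v' ->
  lpnorm (N m) p (ssub (UU w d v) (UU w' d' v')) <=
  (gP * KK w d v w' d' v' + bP + fine (lpnorm (N m) p (ssub d d')))%:E.
Proof.
move=> hw hd hv hw' hd' hv'.
have hW := @W_fin w d v w' d' v' hw hd hv hw' hd' hv'.
apply: nu_sup => T.
set W := WW w d v; set W' := WW w' d' v'.
apply: le_trans (@nu_le2 m m m _ (ssub (Psiu (tr T W)) (Psiu (tr T W'))) (ssub d d') _) _.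
  move=> t; case: (ltnP t T) => tT; last by rewrite trE0 // N0 addr_ge0 ?Nge0.
  rewrite trE1 // /ssub !(causal_tr _ _ _ _ _ _ hPuc tT) /W /W'.
  rewrite (@cl_u R n m F Psix Psiu w d v hPuc t) (@cl_u R n m F Psix Psiu w' d' v' hPuc t).
  have -> : (Psiu (WW w d v) t + d t - (Psiu (WW w' d' v') t + d' t) =
     (Psiu (WW w d v) t - Psiu (WW w' d' v') t) + (d t - d' t))%R
    by apply/rowP => i; rewrite !mxE; lra.
  exact: Ntri.
rewrite !EFinD EFinM -(nu_fin (inlp_sub hd hd')); apply: leeD2r.
apply: le_trans (@leeDr _ _ _ (nu_ge0 _ (ssub (Psix (tr T W)) (Psix (tr T W'))))) _.
apply: le_trans (hPsi _ _ (inlp_tr _ _ _) (inlp_tr _ _ _)) _.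
apply: leeD2r; apply: lee_wpmul2l; first by rewrite lee_fin.
by rewrite tr_sub; apply: le_trans (nu_tr_le _ _ _) hW.
Qed.

Lemma fine_ge0' k (x : sq R k) : (0 <= fine (lpnorm (N k) p x))%R.
Proof. by apply: fine_ge0; exact: nu_ge0. Qed.

Lemma fine_tri k (a b : sq R k) : inlp (N k) p a -> inlp (N k) p b ->
  (fine (lpnorm (N k) p a) <= fine (lpnorm (N k) p (ssub a b)) + fine (lpnorm (N k) p b))%R.
Proof.
move=> ha hb; rewrite -lee_fin EFinD -!nu_fin //; last exact: inlp_sub.
exact: nu_tri_sub.
Qed.

Lemma final ws ds vs : inlp (N n) p ws -> inlp (N m) p ds -> inlp (N n) p vs ->
    exists g b : R, (0 <= g)%R /\ (0 <= b)%R /\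
      forall (w : sq R n) (d : sq R m) (v : sq R n),
        inlp (N n) p w -> inlp (N m) p d -> inlp (N n) p v ->
        let Y := Phi_S1 F Psix Psiu (w, d, v) in
        let Ys := Phi_S1 F Psix Psiu (ws, ds, vs) in
        (lpnorm (N n) p (ssub Y.1.1 Ys.1.1) + lpnorm (N m) p (ssub Y.1.2 Ys.1.2)
         + lpnorm (N n) p (ssub Y.2 Ys.2)
         <= g%:E * (lpnorm (N n) p (ssub w ws) + lpnorm (N m) p (ssub d ds)
                    + lpnorm (N n) p (ssub v vs)) + b%:E)%E.
Proof.
move=> hws hds hvs.
set cv := fine (lpnorm (N n) p vs); set cd := fine (lpnorm (N m) p ds).
have cv0 : (0 <= cv)%R by apply: fine_ge0'.
have cd0 : (0 <= cd)%R by apply: fine_ge0'.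
have q0 : (0 < 1 - ga)%R by rewrite subr_gt0.
set q := ((1 - ga)^-1)%R.
have qp : (0 < q)%R by rewrite invr_gt0.
set c0 := (be + bF + bF + gF * (cv + cd) + gF * (cv + cd))%R.
have c00 : (0 <= c0)%R by apply: ar_c0.
exists ((2 * gP + 1) * (1 + gF) * q + 1)%R, ((2 * gP + 1) * c0 * q + 2 * bP)%R.
split; first exact: ar_g.
split; first exact: ar_b.
move=> w d v hw hd hv.
change (lpnorm (N n) p (ssub (XX w d v) (XX ws ds vs)) + lpnorm (N m) p (ssub (UU w d v) (UU ws ds vs))
         + lpnorm (N n) p (ssub (WW w d v) (WW ws ds vs))
         <= ((2 * gP + 1) * (1 + gF) * q + 1)%R%:E * (lpnorm (N n) p (ssub w ws) + lpnorm (N m) p (ssub d ds)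
                    + lpnorm (N n) p (ssub v vs)) + ((2 * gP + 1) * c0 * q + 2 * bP)%R%:E).
apply: le_trans (leeD (leeD (@X_fin w d v ws ds vs hw hd hv hws hds hvs) (@U_fin w d v ws ds vs hw hd hv hws hds hvs))
   (@W_fin w d v ws ds vs hw hd hv hws hds hvs)) _.
rewrite (nu_fin (inlp_sub hw hws)) (nu_fin (inlp_sub hd hds)) (nu_fin (inlp_sub hv hvs)).
rewrite -!EFinD lee_fin.
have fv := @fine_tri _ _ _ hv hvs; have fd := @fine_tri _ _ _ hd hds.
have gw := fine_ge0' _ (ssub w ws); have gd := fine_ge0' _ (ssub d ds);
  have gv := fine_ge0' _ (ssub v vs).
apply: ar_fin => //.
rewrite /KK /q mulrC; apply: ler_wpM2l; first by rewrite invr_ge0 ltW.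
by apply: ar_num.
Qed.
End NormS.

Theorem theorem2 (R : realType) (N : forall k : nat, 'rV[R]_k -> R)
  (p : \bar R) (n m : nat)
  (F : sq R n -> sq R m -> sq R n) (Psix : sq R n -> sq R n) (Psiu : sq R n -> sq R m) :
  (forall k, is_norm (N k)) ->
  (1 <= p)%E ->
  (* F strictly causal plant with F_0 = 0 *)
  strictly_causal2 F ->
  (forall x u, F x u 0%N = 0) ->
  (* Psi causal, Psi^x - I strictly causal *)
  causal Psix -> causal Psiu ->
  strictly_causal (fun w => ssub (Psix w) w) ->
  (* Psi incrementally finite gain l_p-stable *)
  (exists g b : R, 0 <= g /\ 0 <= b /\
     forall w w', inlp (N n) p w -> inlp (N n) p w' ->
       (lpnorm (N n) p (ssub (Psix w) (Psix w'))
        + lpnorm (N m) p (ssub (Psiu w) (Psiu w'))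
        <= g%:E * lpnorm (N n) p (ssub w w') + b%:E)%E) ->
  (* F incrementally finite gain l_p-stable *)
  (exists g b : R, 0 <= g /\ 0 <= b /\
     forall x u x' u', inlp (N n) p x -> inlp (N m) p u ->
       inlp (N n) p x' -> inlp (N m) p u' ->
       (lpnorm (N n) p (ssub (F x u) (F x' u'))
        <= g%:E * (lpnorm (N n) p (ssub x x') + lpnorm (N m) p (ssub u u'))
           + b%:E)%E) ->
  (* residual Delta = F(Psi) + I - Psi^x is (gamma,beta)-i.f.g. with gamma < 1 *)
  (exists gamma beta : R, 0 <= gamma /\ gamma < 1 /\ 0 <= beta /\
     let Delta := fun w : sq R n => fun t => F (Psix w) (Psiu w) t + w t - Psix w t in
     forall w w', inlp (N n) p w -> inlp (N n) p w' ->
       (lpnorm (N n) p (ssub (Delta w) (Delta w'))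
        <= gamma%:E * lpnorm (N n) p (ssub w w') + beta%:E)%E) ->
  (* conclusion: Phi_{S1'} f.g. l_p-stable at every delta* in l_p *)
  forall (ws : sq R n) (ds : sq R m) (vs : sq R n),
    inlp (N n) p ws -> inlp (N m) p ds -> inlp (N n) p vs ->
    exists g b : R, 0 <= g /\ 0 <= b /\
      forall (w : sq R n) (d : sq R m) (v : sq R n),
        inlp (N n) p w -> inlp (N m) p d -> inlp (N n) p v ->
        let Y := Phi_S1 F Psix Psiu (w, d, v) in
        let Ys := Phi_S1 F Psix Psiu (ws, ds, vs) in
        (lpnorm (N n) p (ssub Y.1.1 Ys.1.1) + lpnorm (N m) p (ssub Y.1.2 Ys.1.2)
         + lpnorm (N n) p (ssub Y.2 Ys.2)
         <= g%:E * (lpnorm (N n) p (ssub w ws) + lpnorm (N m) p (ssub d ds)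
                    + lpnorm (N n) p (ssub v vs)) + b%:E)%E.
Proof.
move=> hN p1 hF hF0 hPxc hPuc hPxs [gP [bP [gP0 [bP0 hPsi]]]]
  [gF [bF [gF0 [bF0 hFb]]]] [ga [be [ga0 [ga1 [be0 hD]]]]] ws ds vs hws hds hvs.
exact: (@final R N hN p p1 n m F Psix Psiu hF hPxc hPuc hPxs gP bP gF bF ga be
  gP0 bP0 gF0 bF0 ga1 be0 hPsi hFb hD ws ds vs hws hds hvs).
Qed.
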